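(* Let $(\varphi,\mathcal A,V)$ be a linear system with $V\neq\{0\}$. If $\ker\varphi$ contains a nonzero left ideal of $\mathcal A$, then the universal dilation of $(\varphi,\mathcal A,V)$ is not equivalent to its principle (canonical) dilation.
   Context: Fix a field $\mathbb F$; all algebras and vector spaces are over $\mathbb F$, and $L(X)$ is the algebra of linear maps $X\to X$. A linear system $(\varphi,\mathcal A,V)$: $\mathcal A$ a unital associative algebra with unit $I$, $V$ a vector space, $\varphi:\mathcal A\to L(V)$ linear with $\varphi(I)=\mathrm{id}_V$. A homomorphism dilation system $(\pi,S,T,W)$: $W$ a vector space, $\pi:\mathcal A\to L(W)$ a unital homomorphism, $T:V\to W$ injective linear, $S:W\to V$ surjective linear, $\varphi(a)=S\pi(a)T$ for all $a$. Two linearly minimal systems (i.e. with $W=\mathrm{span}\{\pi(a)Tv\}$) are equivalent if there is a bijective linear $R:W_1\to W_2$ with $RT_1=T_2$, $S_2R=S_1$, $\pi_1(a)=R^{-1}\pi_2(a)R$ for all $a$. The universal dilation is $(\pi_u,S_u,T_u,\mathcal A\otimes V)$ with $\pi_u(a)(b\otimes x)=(ab)\otimes x$, $T_ux=I\otimes x$, $S_u(a\otimes x)=\varphi(a)x$. Canonical dilation: $\alpha_{a,x}\in L(\mathcal A,V)$, $\alpha_{a,x}(b)=\varphi(ba)x$; $W_c=\mathrm{span}\{\alpha_{a,x}\}$; $\pi_c(a)\alpha_{b,x}=\alpha_{ab,x}$; $T_cx=\alpha_{I,x}$; $S_c(\alpha_{a,x})=\varphi(a)x$. *)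

(* Defs.v *)
From HB Require Import structures.
From mathcomp Require Import all_boot all_order all_algebra.
Set Implicit Arguments. Unset Strict Implicit. Unset Printing Implicit Defensive.
Import GRing.Theory.
Local Open Scope ring_scope.

Section Defs.
Variable F : fieldType.

Definition linear_system (A : algType F) (V : lmodType F) (phi : A -> V -> V) : Prop :=
  [/\ forall a : A, linear (phi a),
      forall x : V, linear (fun a : A => phi a x)
    & forall x : V, phi 1 x = x].

Definition is_left_ideal (A : algType F) (J : A -> Prop) : Prop :=
  [/\ J 0,
      forall (k : F) (u v : A), J u -> J v -> J (k *: u + v)
    & forall (a j : A), J j -> J (a * j)].

Definition ker_contains_nonzero_left_ideal (A : algType F) (V : lmodType F)
    (phi : A -> V -> V) : Prop :=
  exists J : A -> Prop,
    [/\ is_left_ideal J,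
        (exists j : A, J j /\ j <> 0)
      & forall j : A, J j -> forall x : V, phi j x = 0].

Definition bilinear_map (A : algType F) (V W : lmodType F) (B : A -> V -> W) : Prop :=
  (forall x : V, linear (fun a : A => B a x)) /\ (forall a : A, linear (B a)).

(* (W, tens) is a tensor product A (x)_F V, characterized by its universal
   property (determined up to unique isomorphism). *)
Definition is_tensor_product (A : algType F) (V W : lmodType F) (tens : A -> V -> W) : Prop :=
  bilinear_map tens /\
  forall (U : lmodType F) (B : A -> V -> U), bilinear_map B ->
    (exists f : W -> U, linear f /\ forall a x, f (tens a x) = B a x) /\
    (forall f g : W -> U, linear f -> linear g ->
       (forall a x, f (tens a x) = B a x) -> (forall a x, g (tens a x) = B a x) ->
       forall w, f w = g w).

Definition T_u (A : algType F) (V W : lmodType F) (tens : A -> V -> W) (x : V) : W :=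
  tens 1 x.

Definition universal_dilation (A : algType F) (V W : lmodType F) (phi : A -> V -> V)
    (tens : A -> V -> W) (pi_u : A -> W -> W) (S_u : W -> V) : Prop :=
  [/\ forall a : A, linear (pi_u a),
      forall (a b : A) (x : V), pi_u a (tens b x) = tens (a * b) x,
      linear S_u
    & forall (a : A) (x : V), S_u (tens a x) = phi a x].

Definition alpha (A : algType F) (V : lmodType F) (phi : A -> V -> V) (a : A) (x : V) : A -> V :=
  fun b => phi (b * a) x.

Definition in_Wc (A : algType F) (V : lmodType F) (phi : A -> V -> V) (f : A -> V) : Prop :=
  exists s : seq (F * A * V),
    forall b : A, f b = \sum_(t <- s) t.1.1 *: alpha phi t.1.2 t.2 b.

(* pi_c(a) alpha_{b,x} = alpha_{ab,x}; on W_c this is f |-> (c |-> f (c a)). *)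
Definition pi_c (A : algType F) (V : lmodType F) (a : A) (f : A -> V) : A -> V :=
  fun c => f (c * a).

Definition T_c (A : algType F) (V : lmodType F) (phi : A -> V -> V) (x : V) : A -> V :=
  alpha phi 1 x.

(* S_c(alpha_{a,x}) = phi(a) x = alpha_{a,x}(I); on W_c this is f |-> f(I). *)
Definition S_c (A : algType F) (V : lmodType F) (f : A -> V) : V := f 1.

Definition linear_to_fun (A : algType F) (V W : lmodType F) (R : W -> A -> V) : Prop :=
  forall (k : F) (w w' : W) (c : A), R (k *: w + w') c = k *: R w c + R w' c.

(* Equivalence of the universal dilation with the canonical one: a bijective
   linear R : A (x) V -> W_c with R T_u = T_c, S_c R = S_u and
   pi_u(a) = R^{-1} pi_c(a) R (i.e. R pi_u(a) = pi_c(a) R). Elements of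
   W_c are functions A -> V, compared pointwise. *)
Definition equivalent_to_canonical (A : algType F) (V W : lmodType F) (phi : A -> V -> V)
    (tens : A -> V -> W) (pi_u : A -> W -> W) (S_u : W -> V) : Prop :=
  exists R : W -> A -> V,
    [/\ linear_to_fun R,
        (forall w : W, in_Wc phi (R w)) /\
        (forall f : A -> V, in_Wc phi f -> exists w : W, R w =1 f),
        forall w w' : W, R w =1 R w' -> w = w',
        (forall x : V, R (T_u tens x) =1 T_c phi x) /\
        (forall w : W, S_c (R w) = S_u w)
      & forall (a : A) (w : W), R (pi_u a w) =1 pi_c a (R w)].

End Defs.

(* Main.v *)
From HB Require Import structures.
From mathcomp Require Import all_boot all_order all_algebra.
From mathcomp Require Import classical_sets boolp.
Require Import Defs.
Import GRing.Theory.
Local Open Scope ring_scope.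
Local Open Scope classical_set_scope.

Lemma exists_functional (F : fieldType) (V : lmodType F) (x : V) : x != 0 ->
  exists f : V -> F, (forall k u v, f (k *: u + v) = k * f u + f v) /\ f x = 1.
Proof.
move=> xn0.
pose P := fun M : set V => (forall k u v, M u -> M v -> M (k *: u + v)) /\ ~ M x.
have [A [[Acl Ax] Amax]] : exists A, P A /\ forall B, A `<` B -> ~ P B.
  apply: Zorn_bigcup => Fa FP tot; split.
    move=> k u v [X FX Xu] [Y FY Yv].
    case: (tot X Y FX FY) => [XY|YX].
      by exists Y => //; apply: (FP Y FY).1 => //; apply: XY.
    by exists X => //; apply: (FP X FX).1 => //; apply: YX.
  by move=> [X FX Xx]; exact: (FP X FX).2 Xx.
have A0 : A 0.
  case: (pselect (exists u, A u)) => [[u Au]|nA].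
    by have := Acl (-1) u u Au Au; rewrite scaleN1r addNr.
  exfalso; apply: (Amax [set 0]).
    split; first by move=> u Au; exfalso; apply: nA; exists u.
    by move=> /(_ 0 erefl) A0; apply: nA; exists 0.
  split; first by move=> k u v -> ->; rewrite scaler0 addr0.
  by move=> /= x0; rewrite x0 eqxx in xn0.
have key : forall v, exists t, A (v - t *: x).
  move=> v; case: (pselect (A v)) => Av.
    by exists 0; rewrite scale0r subr0.
  pose B := [set w | exists m s, A m /\ w = m + s *: v].
  have AB : A `<` B.
    split; first by move=> m Am; exists m, 0; rewrite scale0r addr0.
    move=> /(_ v) BA; apply: Av; apply: BA.
    by exists 0, 1; rewrite scale1r add0r.
  have Bcl : forall k u w, B u -> B w -> B (k *: u + w).
    move=> k u w [m1 [s1 [Am1 ->]]] [m2 [s2 [Am2 ->]]].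
    exists (k *: m1 + m2), (k * s1 + s2); split; first exact: Acl.
    by rewrite scalerDr scalerA scalerDl addrACA.
  have Bx : B x.
    apply: contrapT => nBx; exact: (Amax B AB (conj Bcl nBx)).
  case: Bx => m [s [Am xE]].
  have sn0 : s != 0.
    by apply/eqP => s0; apply: Ax; rewrite xE s0 scale0r addr0.
  exists s^-1; have -> : v - s^-1 *: x = (- s^-1) *: m + 0.
    by rewrite xE scalerDr scalerA mulVf // scale1r addr0 opprD addrA addrC addrA addNr add0r scaleNr.
  exact: Acl.
have uniq : forall v t t', A (v - t *: x) -> A (v - t' *: x) -> t = t'.
  move=> v t t' H1 H2; apply/eqP; apply: contraT => ntt.
  have H3 := Acl (-1) _ _ H1 H2.
  have H4 := Acl (t - t')^-1 _ _ H3 A0.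
  suff : False by []; apply: Ax; move: H4.
  have -> : (t - t')^-1 *: (-1 *: (v - t *: x) + (v - t' *: x)) + 0 = x => //.
  rewrite addr0 scaleN1r opprB addrC addrA subrK -scalerBl scalerA [- t' + t]addrC mulVf ?scale1r //.
  by rewrite subr_eq0.
pose f v := sval (cid (key v)).
have fP : forall v, A (v - f v *: x) by move=> v; rewrite /f; case: cid.
exists f; split.
  move=> k u v; apply: (uniq (k *: u + v)); first exact: fP.
  have -> : k *: u + v - (k * f u + f v) *: x = k *: (u - f u *: x) + (v - f v *: x).
    by rewrite scalerDl -scalerA scalerBr opprD addrACA.
  by apply: Acl; apply: fP.
apply: (uniq x); first exact: fP.
by rewrite scale1r subrr.
Qed.

Theorem corollary4p2 (F : fieldType) (A : algType F) (V : lmodType F)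
    (phi : A -> V -> V) (W : lmodType F) (tens : A -> V -> W)
    (pi_u : A -> W -> W) (S_u : W -> V) :
  linear_system phi ->
  (exists x : V, x != 0) ->
  ker_contains_nonzero_left_ideal phi ->
  is_tensor_product tens ->
  universal_dilation phi tens pi_u S_u ->
  ~ equivalent_to_canonical phi tens pi_u S_u.
Proof.
move=> _ [x0 x0n0] [J [[J0 Jcl Jid] [j [Jj jn0]] Jker]] [_ Huniv]
  [_ Hpitens _ _] [R [HR _ Rinj [HT _] Hpic]].
have R0 : forall c, R 0 c = 0.
  move=> c; have := HR 1 0 0 c; rewrite scale1r addr0 scale1r => /(congr1 (fun z => z - R 0 c)).
  by rewrite subrr addrK.
have tj0 : tens j x0 = 0.
  apply: Rinj => c; rewrite R0.
  have -> : tens j x0 = pi_u j (tens 1 x0) by rewrite Hpitens mulr1.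
  rewrite Hpic /pi_c.
  have := HT x0 (c * j); rewrite /T_u => ->.
  by rewrite /T_c /alpha mulr1; apply: Jker; apply: Jid.
have [f [flin fx]] := @exists_functional _ _ x0 x0n0.
have Bbil : bilinear_map (fun (a : A) (y : V) => f y *: a).
  split.
    by move=> y k a b /=; rewrite scalerDr scalerA mulrC -scalerA.
  by move=> a k y z /=; rewrite flin scalerDl scalerA.
have [[h [hlin hP]] _] := Huniv A _ Bbil.
apply: jn0; have := hP j x0; rewrite tj0 fx scale1r => <-.
have := hlin 1 0 0; rewrite scale1r addr0 scale1r => /(congr1 (fun z => z - h 0)).
by rewrite subrr addrK.
Qed.
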